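(* Let $\mathcal{X},\mathcal{A}$ be finite sets, let $P_{A|X}$ be a channel, and for $n\ge1$ let $P^{\times n}_{XAB}(x^n,a^n,b^n)=|\mathcal{X}|^{-n}\prod_{i=1}^n P_{A|X}(a_i|x_i)P_{A|X}(b_i|x_i)$ on $\mathcal{X}^n\times\mathcal{A}^n\times\mathcal{A}^n$. Let $\omega_{\mathrm{ns}}(n)=\sup_Q\sum_{x^n,a^n,b^n}P^{\times n}_{XAB}(x^n,a^n,b^n)Q(x^n,x^n|a^n,b^n)$, the supremum over all no-signalling conditional distributions $Q$. Then $$\limsup_{n\to\infty}\frac{\log\omega_{\mathrm{ns}}(n)}{n}\le\max_{Q_{XA}}\Big(I(X;A)_Q-2D(Q_{A|X}\,\|\,P_{A|X}\mid Q_X)\Big)-\log|\mathcal{X}|,$$ the maximum being over all probability distributions $Q_{XA}$ on $\mathcal{X}\times\mathcal{A}$.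
   Context: Logarithms are base $2$. A no-signalling conditional distribution is a conditional distribution $Q(y,z|a^n,b^n)$ on $\mathcal{X}^n\times\mathcal{X}^n$ given $(a^n,b^n)\in\mathcal{A}^n\times\mathcal{A}^n$ such that $\sum_y Q(y,z|a^n,b^n)$ does not depend on $a^n$ and $\sum_z Q(y,z|a^n,b^n)$ does not depend on $b^n$. $I(X;A)_Q=H(X)_Q+H(A)_Q-H(X,A)_Q$ (Shannon entropies); $D(P\|Q)=\sum_x P(x)\log\frac{P(x)}{Q(x)}$; $D(Q_{A|X}\|P_{A|X}\mid Q_X)=\sum_x Q_X(x)D(Q_{A|X=x}\|P_{A|X=x})$. *)

(* Defs.v *)
From HB Require Import structures.
From mathcomp Require Import all_boot all_order all_algebra.
From mathcomp Require Import all_classical all_reals all_analysis.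
Set Implicit Arguments. Unset Strict Implicit. Unset Printing Implicit Defensive.
Import Order.TTheory GRing.Theory Num.Theory.
Local Open Scope ring_scope.

Section Defs.
Context {R : realType}.

Definition log2 (x : R) : R := ln x / ln 2.

Definition is_dist (T : finType) (p : T -> R) : Prop :=
  (forall t, 0 <= p t) /\ \sum_(t : T) p t = 1.

Definition is_channel (X A : finType) (W : X -> A -> R) : Prop :=
  forall x, is_dist (W x).

Definition entropy (T : finType) (p : T -> R) : R :=
  - \sum_(t : T) (if p t == 0 then 0 else p t * log2 (p t)).

Definition KLdiv (T : finType) (p r : T -> R) : \bar R :=
  (\sum_(t : T)
     (if p t == 0%R then 0%E
      else if r t == 0%R then +oo%E
      else (p t * log2 (p t / r t))%:E))%E.

Section Joint.
Variables (X A : finType) (q : X -> A -> R).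
Definition margX (x : X) : R := \sum_(a : A) q x a.
Definition margA (a : A) : R := \sum_(x : X) q x a.
Definition joint (xa : X * A) : R := q xa.1 xa.2.
Definition mutinfo : R := entropy margX + entropy margA - entropy joint.
(* conditional Q_{A|X=x} (irrelevant when Q_X(x) = 0, since it is weighted by 0) *)
Definition condA (x : X) (a : A) : R := q x a / margX x.
Definition condKL (W : X -> A -> R) : \bar R :=
  (\sum_(x : X) (margX x)%:E * KLdiv (condA x) (W x))%E.
End Joint.

Definition Pn (X A : finType) (W : X -> A -> R) (n : nat)
    (x : {ffun 'I_n -> X}) (a b : {ffun 'I_n -> A}) : R :=
  (#|X|%:R ^- n) * \prod_(i < n) (W (x i) (a i) * W (x i) (b i)).

Definition no_signalling (X A : finType) (n : nat)
    (Q : {ffun 'I_n -> X} -> {ffun 'I_n -> X} ->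
         {ffun 'I_n -> A} -> {ffun 'I_n -> A} -> R) : Prop :=
  (forall y z a b, 0 <= Q y z a b) /\
  (forall a b, \sum_(y : {ffun 'I_n -> X}) \sum_(z : {ffun 'I_n -> X}) Q y z a b = 1) /\
  (forall z a a' b, \sum_(y : {ffun 'I_n -> X}) Q y z a b = \sum_(y : {ffun 'I_n -> X}) Q y z a' b) /\
  (forall y a b b', \sum_(z : {ffun 'I_n -> X}) Q y z a b = \sum_(z : {ffun 'I_n -> X}) Q y z a b').

Definition ns_value (X A : finType) (W : X -> A -> R) (n : nat)
    (Q : {ffun 'I_n -> X} -> {ffun 'I_n -> X} ->
         {ffun 'I_n -> A} -> {ffun 'I_n -> A} -> R) : R :=
  \sum_(x : {ffun 'I_n -> X}) \sum_(a : {ffun 'I_n -> A}) \sum_(b : {ffun 'I_n -> A})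
     Pn W x a b * Q x x a b.

Definition omega_ns (X A : finType) (W : X -> A -> R) (n : nat) : R :=
  sup [set v | exists Q, no_signalling Q /\ v = @ns_value X A W n Q].

Definition objective (X A : finType) (W : X -> A -> R) (q : X -> A -> R) : \bar R :=
  ((mutinfo q)%:E - 2%:E * condKL q W)%E.

End Defs.

(* Main.v *)
Require Import Defs.
From HB Require Import structures.
From mathcomp Require Import all_boot all_order all_algebra.
From mathcomp Require Import all_classical all_reals all_analysis.
From mathcomp Require Import ring lra.
Import Order.TTheory GRing.Theory Num.Theory.
Set Implicit Arguments. Unset Strict Implicit. Unset Printing Implicit Defensive.
Local Open Scope ring_scope.

Section Basic.
Variable R : realType.

Lemma ln_le_sub1 (x : R) : 0 < x -> ln x <= x - 1.
Proof.
move=> x0; have := @le_ln1Dx R (x - 1).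
have -> : 1 + (x - 1) = x by ring.
apply; lra.
Qed.

Lemma ln_prod (I : finType) (F : I -> R) :
  (forall i, 0 < F i) -> ln (\prod_i F i) = \sum_i ln (F i).
Proof.
move=> Fp.
have H := (@big_ind2 R R (fun p s => (0 < p) /\ ln p = s) 1 *%R 0 +%R).
have [] // := H _ _ I (index_enum I) xpredT F (fun i => ln (F i)).
- by rewrite ln1 ltr01.
- move=> a1 a2 b1 b2 [a0 <-] [b0 <-]; split; first exact: mulr_gt0.
  by rewrite lnM ?posrE.
Qed.

Lemma ln_sqrt (x : R) : 0 < x -> ln (Num.sqrt x) = ln x / 2.
Proof.
move=> x0; have s0 : 0 < Num.sqrt x by rewrite sqrtr_gt0.
have : ln (Num.sqrt x * Num.sqrt x) = ln x.
  by rewrite -expr2 sqr_sqrtr // ltW.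
rewrite lnM ?posrE // => <-; lra.
Qed.

Lemma sqrt_amgm (u v : R) : 0 <= u -> 0 <= v -> Num.sqrt (u * v) <= (u + v) / 2.
Proof.
move=> u0 v0; rewrite sqrtrM //.
have su := sqr_sqrtr u0; have sv := sqr_sqrtr v0.
have : 0 <= (Num.sqrt u - Num.sqrt v) ^+ 2 by rewrite sqr_ge0.
rewrite sqrrB su sv; lra.
Qed.

Lemma le_sqrt_prod (q u v : R) : 0 <= q -> q <= u -> q <= v -> q <= Num.sqrt (u * v).
Proof.
move=> q0 qu qv; have -> : q = Num.sqrt (q * q) by rewrite -expr2 sqrtr_sqr ger0_norm.
rewrite ler_sqrt; last by apply: mulr_ge0; apply: le_trans qu || apply: le_trans qv.
by apply: ler_pM.
Qed.

Lemma marg_sum (Z K : finType) (phi : Z -> K) (r : Z -> R) (g : K -> R) :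
  \sum_k (\sum_(z | phi z == k) r z) * g k = \sum_z r z * g (phi z).
Proof.
rewrite [RHS](partition_big phi xpredT) //=; apply: eq_bigr => k _.
rewrite big_distrl /=; apply: eq_bigr => z /eqP -> //.
Qed.

Lemma term_le_sum (I : finType) (F : I -> R) (i : I) :
  (forall j, 0 <= F j) -> F i <= \sum_j F j.
Proof.
move=> F0; rewrite (bigD1 i) //= lerDl; exact: sumr_ge0.
Qed.

End Basic.


Section Obj.
Variables (R : realType) (X A : finType) (W : X -> A -> R).

Definition gF (q : X -> A -> R) x a :=
  2 * ln (W x a) - ln (margA q a) - ln (q x a) + ln (margX q x).
Definition Fr (q : X -> A -> R) := \sum_x \sum_a q x a * gF q x a.

Lemma obj_eq q : (forall x a, 0 <= q x a) ->
  (forall x a, 0 < q x a -> 0 < W x a) ->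
  objective W q = (Fr q / ln 2)%:E.
Proof.
move=> q0 Wp.
have mX0 x a : margX q x = 0 -> q x a = 0.
  by move=> /eqP; rewrite psumr_eq0 // => /allP/(_ a); rewrite mem_index_enum => /(_ isT) /eqP.
have qXle x a : q x a <= margX q x by rewrite /margX; apply: term_le_sum => j.
have qAle x a : q x a <= margA q a by rewrite /margA; apply: (@term_le_sum _ _ (fun j => q j a)) => j.
have K x : KLdiv (condA q x) (W x) =
    (\sum_a condA q x a * log2 (condA q x a / W x a))%:E.
  rewrite /KLdiv -sumEFin; apply: eq_bigr => a _.
  have [c0|c0] := eqVneq (condA q x a) 0; first by rewrite c0 mul0r.
  have qp : 0 < q x a.
    rewrite lt_def q0 andbT; apply: contraNneq c0 => qz.
    by rewrite /condA qz mul0r.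
  by rewrite (gt_eqF (Wp _ _ qp)).
rewrite /objective /condKL.
under eq_bigr do rewrite K -EFinM.
rewrite sumEFin -EFinM -EFinB; congr EFin.
have E1 : entropy (margX q) = - \sum_x \sum_a q x a * log2 (margX q x).
  rewrite /entropy; congr -%R; apply: eq_bigr => x _.
  have -> : \sum_a q x a * log2 (margX q x) = margX q x * log2 (margX q x).
    by rewrite -mulr_suml.
  by case: ifP => [/eqP ->|]; rewrite ?mul0r.
have E2 : entropy (margA q) = - \sum_x \sum_a q x a * log2 (margA q a).
  rewrite /entropy exchange_big; congr -%R; apply: eq_bigr => a _ /=.
  have -> : \sum_x q x a * log2 (margA q a) = margA q a * log2 (margA q a).
    by rewrite -mulr_suml.
  by case: ifP => [/eqP ->|]; rewrite ?mul0r.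
have E3 : entropy (joint q) = - \sum_x \sum_a q x a * log2 (q x a).
  rewrite /entropy pair_bigA; congr -%R; apply: eq_bigr => [[x a]] _ /=.
  by rewrite /joint /=; case: ifP => [/eqP ->|]; rewrite ?mul0r.
have E4 : \sum_x margX q x * (\sum_a condA q x a * log2 (condA q x a / W x a))
   = \sum_x \sum_a q x a * log2 (q x a / margX q x / W x a).
  apply: eq_bigr => x _; rewrite mulr_sumr; apply: eq_bigr => a _.
  rewrite /condA mulrA.
  have [m0|m0] := eqVneq (margX q x) 0.
    by rewrite m0 mul0r (mX0 x a m0) mul0r.
  by rewrite [margX q x * _]mulrC divfK.
have P x a : q x a * gF q x a / ln 2 =
   - (q x a * log2 (margX q x)) - q x a * log2 (margA q a)
   + q x a * log2 (q x a) - 2 * (q x a * log2 (q x a / margX q x / W x a)).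
  have [qz|qp] := eqVneq (q x a) 0.
    rewrite qz !mul0r; ring.
  have qp' : 0 < q x a by rewrite lt_def qp q0.
  have mXp : 0 < margX q x := lt_le_trans qp' (qXle x a).
  have mAp : 0 < margA q a := lt_le_trans qp' (qAle x a).
  have Wp' := Wp _ _ qp'.
  rewrite /log2 !ln_div ?posrE ?divr_gt0 //.
  rewrite /gF; ring.
have FrE : Fr q / ln 2 =
   - (\sum_x \sum_a q x a * log2 (margX q x))
   - (\sum_x \sum_a q x a * log2 (margA q a))
   + (\sum_x \sum_a q x a * log2 (q x a))
   - 2 * (\sum_x \sum_a q x a * log2 (q x a / margX q x / W x a)).
  rewrite /Fr mulr_suml.
  under eq_bigr do rewrite mulr_suml.
  under eq_bigr do under eq_bigr do rewrite P.
  under eq_bigr do rewrite !big_split /= !sumrN -!mulr_sumr.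
  by rewrite !big_split /= !sumrN -!mulr_sumr.
rewrite FrE /mutinfo E1 E2 E3 E4; lra.
Qed.

End Obj.


Section Gen.
Variables (R : realType) (X A : finType) (n : nat).
Local Notation XN := {ffun 'I_n -> X}.
Local Notation AN := {ffun 'I_n -> A}.

Lemma sumZ (F : (XN * AN) * AN -> R) :
  \sum_z F z = \sum_(x : XN) \sum_(a : AN) \sum_(b : AN) F ((x, a), b).
Proof.
symmetry; rewrite pair_bigA pair_bigA; apply: eq_bigr => [[[x a] b]] _ //.
Qed.

Lemma sumU_gen (Q : XN -> AN -> R) (m : 'I_n -> A -> R) (c : 'I_n -> X -> A -> R) :
  (forall x a, 0 <= Q x a) -> (forall a, \sum_x Q x a = 1) ->
  (forall i a, 0 <= m i a) -> (forall i, \sum_a m i a = 1) ->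
  (forall i x b, 0 <= c i x b) -> (forall i x, \sum_b c i x b <= 1) ->
  \sum_(x : XN) \sum_(a : AN) \sum_(b : AN) Q x a * \prod_i (m i (a i) * c i (x i) (b i)) <= 1.
Proof.
move=> Q0 Qs m0 ms c0 cs.
have E (x : XN) (a : AN) : \sum_(b : AN) Q x a * \prod_i (m i (a i) * c i (x i) (b i)) =
    Q x a * \prod_i m i (a i) * \prod_i \sum_b c i (x i) b.
  rewrite bigA_distr_bigA /= mulr_sumr; apply: eq_bigr => b _.
  by rewrite big_split /= mulrA.
under eq_bigr do under eq_bigr do rewrite E.
apply: (@le_trans _ _ (\sum_(x : XN) \sum_(a : AN) Q x a * \prod_i m i (a i))).
  apply: ler_sum => x _; apply: ler_sum => a _.
  apply: ler_piMr; first by apply: mulr_ge0 => //; apply: prodr_ge0.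
  apply: prodr_ile1 => i _; rewrite cs andbT; exact: sumr_ge0.
rewrite exchange_big /=.
under eq_bigr do rewrite -mulr_suml Qs mul1r.
rewrite -bigA_distr_bigA /=.
by rewrite big1 // => i _; rewrite ms.
Qed.

Lemma qle_mA (q : X -> A -> R) x a : (forall x a, 0 <= q x a) -> q x a <= margA q a.
Proof. by move=> q0; rewrite /margA; apply: (@term_le_sum _ _ (fun j => q j a)) => j. Qed.
Lemma qle_mX (q : X -> A -> R) x a : (forall x a, 0 <= q x a) -> q x a <= margX q x.
Proof. by move=> q0; rewrite /margX; apply: (@term_le_sum _ _ (fun j => q x j)) => j. Qed.

End Gen.

Section Key.
Variables (R : realType) (X A : finType) (W : X -> A -> R) (n : nat).
Hypothesis W0 : forall x a, 0 <= W x a.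
Hypothesis Xpos : (0 < #|X|)%N.
Local Notation XN := {ffun 'I_n -> X}.
Local Notation AN := {ffun 'I_n -> A}.
Local Notation Z := ((XN * AN) * AN)%type.
Variables (Q1 Q2 : XN -> AN -> R).
Hypothesis Q10 : forall x a, 0 <= Q1 x a.
Hypothesis Q20 : forall x a, 0 <= Q2 x a.
Hypothesis Q1s : forall a, \sum_x Q1 x a = 1.
Hypothesis Q2s : forall b, \sum_x Q2 x b = 1.

Definition pz (z : Z) := Pn W z.1.1 z.1.2 z.2.
Definition fz (z : Z) := Num.sqrt (Q1 z.1.1 z.1.2 * Q2 z.1.1 z.2).
Definition Tz := \sum_(z : Z) pz z * fz z.
Hypothesis Tpos : 0 < Tz.
Definition rz z := pz z * fz z / Tz.
Definition qA (i : 'I_n) (x : X) (a : A) :=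
  \sum_(z : Z | (z.1.1 i, z.1.2 i) == (x, a)) rz z.
Definition qB (i : 'I_n) (x : X) (b : A) :=
  \sum_(z : Z | (z.1.1 i, z.2 i) == (x, b)) rz z.

Lemma pz0 z : 0 <= pz z.
Proof.
rewrite /pz /Pn; apply: mulr_ge0.
  by rewrite invr_ge0 exprn_ge0.
by apply: prodr_ge0 => i _; apply: mulr_ge0.
Qed.

Lemma rz0 z : 0 <= rz z.
Proof.
apply: divr_ge0; [apply: mulr_ge0; [exact: pz0|exact: sqrtr_ge0]|exact: ltW].
Qed.

Lemma rsum : \sum_z rz z = 1.
Proof. by rewrite /rz -mulr_suml divff // gt_eqF. Qed.

Lemma qmarg (phi : Z -> X * A) (g : X -> A -> R) :
  \sum_x \sum_a (\sum_(z : Z | phi z == (x, a)) rz z) * g x a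
  = \sum_z rz z * g (phi z).1 (phi z).2.
Proof.
rewrite pair_bigA -(marg_sum phi rz (fun k => g k.1 k.2)).
by apply: eq_bigr => [[x a]] _.
Qed.

Lemma qdist (phi : Z -> X * A) :
  is_dist (joint (fun x a => \sum_(z : Z | phi z == (x, a)) rz z)).
Proof.
split; first by move=> t; apply: sumr_ge0 => z _; exact: rz0.
rewrite /joint -(pair_bigA _ (fun x a => \sum_(z : Z | phi z == (x, a)) rz z)).
rewrite (_ : \sum_x \sum_a _ = \sum_x \sum_a
   (\sum_(z : Z | phi z == (x, a)) rz z) * (fun _ _ => 1) x a); last first.
  by apply: eq_bigr => x _; apply: eq_bigr => a _; rewrite mulr1.
rewrite qmarg -[RHS]rsum; apply: eq_bigr => z _; by rewrite mulr1.
Qed.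

Lemma qA_dist i : is_dist (joint (qA i)).
Proof. exact: (qdist (fun z : Z => (z.1.1 i, z.1.2 i))). Qed.
Lemma qB_dist i : is_dist (joint (qB i)).
Proof. exact: (qdist (fun z : Z => (z.1.1 i, z.2 i))). Qed.

Lemma pz_W z : 0 < pz z -> forall i, 0 < W (z.1.1 i) (z.1.2 i) /\ 0 < W (z.1.1 i) (z.2 i).
Proof.
move=> pp i.
have P0 : \prod_j (W (z.1.1 j) (z.1.2 j) * W (z.1.1 j) (z.2 j)) != 0.
  apply: contraTneq pp; rewrite /pz /Pn => ->; by rewrite mulr0 ltxx.
have : W (z.1.1 i) (z.1.2 i) * W (z.1.1 i) (z.2 i) != 0.
  by apply: contra P0 => H; apply/prodf_eq0; exists i.
rewrite mulf_eq0 negb_or => /andP [H1 H2].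
by rewrite !lt_def H1 H2 !W0.
Qed.

Lemma rz_pos z : 0 < rz z -> 0 < pz z /\ 0 < fz z.
Proof.
move=> rp; have pn : pz z != 0.
  by apply: contraTneq rp; rewrite /rz => ->; rewrite !mul0r ltxx.
have fn : fz z != 0.
  by apply: contraTneq rp; rewrite /rz => ->; rewrite mulr0 mul0r ltxx.
by rewrite !lt_def pn fn pz0 sqrtr_ge0.
Qed.

Lemma qA_supp i x a : 0 < qA i x a -> 0 < W x a.
Proof.
move=> qp; rewrite lt_def W0 andbT; apply/negP => /eqP Wz; move: qp.
rewrite /qA big1 ?ltxx // => z /eqP [xi ai].
have [->|rp] := eqVneq (rz z) 0 => //.
have rp' : 0 < rz z by rewrite lt_def rp rz0.
have [/pz_W H _] := rz_pos rp'.
by have [] := H i; rewrite xi ai Wz ltxx.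
Qed.

Lemma qB_supp i x a : 0 < qB i x a -> 0 < W x a.
Proof.
move=> qp; rewrite lt_def W0 andbT; apply/negP => /eqP Wz; move: qp.
rewrite /qB big1 ?ltxx // => z /eqP [xi ai].
have [->|rp] := eqVneq (rz z) 0 => //.
have rp' : 0 < rz z by rewrite lt_def rp rz0.
have [/pz_W H _] := rz_pos rp'.
by have [] := H i; rewrite xi ai Wz ltxx.
Qed.

Definition Uz (z : Z) := Q1 z.1.1 z.1.2 * \prod_i (margA (qA i) (z.1.2 i) *
   (qB i (z.1.1 i) (z.2 i) / margX (qB i) (z.1.1 i))).
Definition Vz (z : Z) := Q2 z.1.1 z.2 * \prod_i (margA (qB i) (z.2 i) *
   (qA i (z.1.1 i) (z.1.2 i) / margX (qA i) (z.1.1 i))).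
Definition sz z := Num.sqrt (Uz z * Vz z).
Definition hz (z : Z) := - (ln (#|X|%:R : R) *+ n) +
  (\sum_i (gF W (qA i) (z.1.1 i) (z.1.2 i) + gF W (qB i) (z.1.1 i) (z.2 i))) / 2.

Lemma qA0 i x a : 0 <= qA i x a.
Proof. by apply: sumr_ge0 => z _; exact: rz0. Qed.
Lemma qB0 i x a : 0 <= qB i x a.
Proof. by apply: sumr_ge0 => z _; exact: rz0. Qed.

Lemma mA_sum (q : X -> A -> R) : is_dist (joint q) -> \sum_a margA q a = 1.
Proof.
move=> [_ qs]; rewrite /margA exchange_big /= pair_bigA; exact: qs.
Qed.

Lemma c_sum (q : X -> A -> R) x : \sum_b q x b / margX q x <= 1.
Proof.
rewrite -mulr_suml -/(margX q x).
have [->|m0] := eqVneq (margX q x) 0; first by rewrite mul0r ler01.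
by rewrite divff.
Qed.

Lemma c_ge0 (q : X -> A -> R) x b : (forall x a, 0 <= q x a) -> 0 <= q x b / margX q x.
Proof.
move=> q0; apply: divr_ge0 => //; rewrite /margX; exact: sumr_ge0.
Qed.

Lemma mA_ge0 (q : X -> A -> R) a : (forall x a, 0 <= q x a) -> 0 <= margA q a.
Proof. by move=> q0; rewrite /margA; exact: sumr_ge0. Qed.

Lemma sumU : \sum_z Uz z <= 1.
Proof.
rewrite sumZ.
exact: (sumU_gen (Q := Q1) (m := fun i a => margA (qA i) a)
  (c := fun i x b => qB i x b / margX (qB i) x) Q10 Q1s
  (fun i a => mA_ge0 a (qA0 i)) (fun i => mA_sum (qA_dist i))
  (fun i x b => c_ge0 x b (qB0 i)) (fun i x => c_sum (qB i) x)).
Qed.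

Lemma sumV : \sum_z Vz z <= 1.
Proof.
rewrite sumZ; under eq_bigr do rewrite exchange_big.
exact: (sumU_gen (Q := Q2) (m := fun i a => margA (qB i) a)
  (c := fun i x b => qA i x b / margX (qA i) x) Q20 Q2s
  (fun i a => mA_ge0 a (qB0 i)) (fun i => mA_sum (qB_dist i))
  (fun i x b => c_ge0 x b (qA0 i)) (fun i x => c_sum (qA i) x)).
Qed.

Lemma step z : rz z * (ln Tz - hz z) <= sz z - rz z.
Proof.
have [->|rn] := eqVneq (rz z) 0.
  by rewrite mul0r subr0; exact: sqrtr_ge0.
have rp : 0 < rz z by rewrite lt_def rn rz0.
have [pp fp] := rz_pos rp.
have QQ : 0 < Q1 z.1.1 z.1.2 * Q2 z.1.1 z.2 by rewrite -sqrtr_gt0.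
have Q1p : 0 < Q1 z.1.1 z.1.2.
  rewrite lt_def Q10 andbT; apply: contraTneq QQ => ->; by rewrite mul0r ltxx.
have Q2p : 0 < Q2 z.1.1 z.2.
  rewrite lt_def Q20 andbT; apply: contraTneq QQ => ->; by rewrite mulr0 ltxx.
have Wp := pz_W pp.
have qAp i : 0 < qA i (z.1.1 i) (z.1.2 i).
  apply: (lt_le_trans rp); rewrite /qA (bigD1 z) //= lerDl.
  by apply: sumr_ge0 => y _; exact: rz0.
have qBp i : 0 < qB i (z.1.1 i) (z.2 i).
  apply: (lt_le_trans rp); rewrite /qB (bigD1 z) //= lerDl.
  by apply: sumr_ge0 => y _; exact: rz0.
have mAAp i : 0 < margA (qA i) (z.1.2 i) := lt_le_trans (qAp i) (qle_mA _ _ (qA0 i)).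
have mABp i : 0 < margA (qB i) (z.2 i) := lt_le_trans (qBp i) (qle_mA _ _ (qB0 i)).
have mXAp i : 0 < margX (qA i) (z.1.1 i) := lt_le_trans (qAp i) (qle_mX _ _ (qA0 i)).
have mXBp i : 0 < margX (qB i) (z.1.1 i) := lt_le_trans (qBp i) (qle_mX _ _ (qB0 i)).
have PUp : 0 < \prod_i (margA (qA i) (z.1.2 i) *
   (qB i (z.1.1 i) (z.2 i) / margX (qB i) (z.1.1 i))).
  by apply: prodr_gt0 => i _; rewrite mulr_gt0 ?divr_gt0.
have PVp : 0 < \prod_i (margA (qB i) (z.2 i) *
   (qA i (z.1.1 i) (z.1.2 i) / margX (qA i) (z.1.1 i))).
  by apply: prodr_gt0 => i _; rewrite mulr_gt0 ?divr_gt0.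
have Up : 0 < Uz z by rewrite /Uz mulr_gt0.
have Vp : 0 < Vz z by rewrite /Vz mulr_gt0.
have sp : 0 < sz z by rewrite /sz sqrtr_gt0 mulr_gt0.
have lnU : ln (Uz z) = ln (Q1 z.1.1 z.1.2) + \sum_i (ln (margA (qA i) (z.1.2 i)) +
    (ln (qB i (z.1.1 i) (z.2 i)) - ln (margX (qB i) (z.1.1 i)))).
  rewrite /Uz lnM ?posrE //; congr (_ + _).
  rewrite ln_prod; last by move=> i; rewrite mulr_gt0 ?divr_gt0.
  by apply: eq_bigr => i _; rewrite lnM ?posrE ?divr_gt0 // ln_div ?posrE.
have lnV' : ln (Vz z) = ln (Q2 z.1.1 z.2) + \sum_i (ln (margA (qB i) (z.2 i)) +
    (ln (qA i (z.1.1 i) (z.1.2 i)) - ln (margX (qA i) (z.1.1 i)))).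
  rewrite /Vz lnM ?posrE //; congr (_ + _).
  rewrite ln_prod; last by move=> i; rewrite mulr_gt0 ?divr_gt0.
  by apply: eq_bigr => i _; rewrite lnM ?posrE ?divr_gt0 // ln_div ?posrE.
have lnS : ln (sz z) = (ln (Uz z) + ln (Vz z)) / 2.
  by rewrite /sz ln_sqrt ?mulr_gt0 // lnM ?posrE.
have lnR : ln (rz z) = ln (pz z) + ln (fz z) - ln Tz.
  have pf : 0 < pz z * fz z by exact: mulr_gt0.
  by rewrite /rz ln_div ?posrE // lnM ?posrE.
have Xp : 0 < (#|X|%:R : R) by rewrite ltr0n.
have lnP : ln (pz z) = - (ln (#|X|%:R : R) *+ n) +
    \sum_i (ln (W (z.1.1 i) (z.1.2 i)) + ln (W (z.1.1 i) (z.2 i))).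
  rewrite /pz /Pn lnM ?posrE ?invr_gt0 ?exprn_gt0 //; last first.
    by apply: prodr_gt0 => i _; have [] := Wp i; apply: mulr_gt0.
  rewrite lnV ?posrE ?exprn_gt0 // lnXn //; congr (_ + _).
  rewrite ln_prod; last by move=> i; have [] := Wp i; apply: mulr_gt0.
  by apply: eq_bigr => i _; have [] := Wp i; move=> ? ?; rewrite lnM ?posrE.
have lnF : ln (fz z) = (ln (Q1 z.1.1 z.1.2) + ln (Q2 z.1.1 z.2)) / 2.
  by rewrite /fz ln_sqrt // lnM ?posrE.
have HS : \sum_i (gF W (qA i) (z.1.1 i) (z.1.2 i) + gF W (qB i) (z.1.1 i) (z.2 i)) =
   2 * \sum_i (ln (W (z.1.1 i) (z.1.2 i)) + ln (W (z.1.1 i) (z.2 i)))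
   - \sum_i (ln (margA (qA i) (z.1.2 i)) +
    (ln (qB i (z.1.1 i) (z.2 i)) - ln (margX (qB i) (z.1.1 i))))
   - \sum_i (ln (margA (qB i) (z.2 i)) +
    (ln (qA i (z.1.1 i) (z.1.2 i)) - ln (margX (qA i) (z.1.1 i)))).
  by rewrite mulr_sumr -!sumrB; apply: eq_bigr => i _; rewrite /gF; ring.
have E : ln Tz - hz z = ln (sz z) - ln (rz z).
  rewrite /hz HS lnS lnU lnV' lnR lnP lnF; lra.
rewrite E -ln_div ?posrE //.
have H := ln_le_sub1 (divr_gt0 sp rp).
apply: le_trans (ler_wpM2l (ltW rp) H) _.
by rewrite mulrBr mulr1 [rz z * _]mulrC divfK.
Qed.

Lemma key : ln Tz <= - (ln (#|X|%:R : R) *+ n) +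
    (\sum_i (Fr W (qA i) + Fr W (qB i))) / 2.
Proof.
have FA i : Fr W (qA i) = \sum_z rz z * gF W (qA i) (z.1.1 i) (z.1.2 i).
  exact: (qmarg (fun z : Z => (z.1.1 i, z.1.2 i)) (gF W (qA i))).
have FB i : Fr W (qB i) = \sum_z rz z * gF W (qB i) (z.1.1 i) (z.2 i).
  exact: (qmarg (fun z : Z => (z.1.1 i, z.2 i)) (gF W (qB i))).
have RHSE : - (ln (#|X|%:R : R) *+ n) + (\sum_i (Fr W (qA i) + Fr W (qB i))) / 2
    = \sum_z rz z * hz z.
  rewrite /hz; under [RHS]eq_bigr do rewrite mulrDr.
  rewrite [RHS]big_split /= -mulr_suml rsum mul1r; congr (_ + _).
  under [RHS]eq_bigr do rewrite mulrA.
  rewrite -mulr_suml; congr (_ * _).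
  symmetry; rewrite (eq_bigr (fun z => \sum_i rz z *
     (gF W (qA i) (z.1.1 i) (z.1.2 i) + gF W (qB i) (z.1.1 i) (z.2 i)))); last first.
    by move=> z _; rewrite mulr_sumr.
  rewrite exchange_big; apply: eq_bigr => i _ /=.
  rewrite FA FB -big_split; apply: eq_bigr => z _ /=.
  by rewrite mulrDr.
rewrite RHSE.
have LT : ln Tz = \sum_z rz z * ln Tz by rewrite -mulr_suml rsum mul1r.
rewrite LT -subr_le0 -sumrB.
under eq_bigr do rewrite -mulrBr.
apply: (le_trans (ler_sum _ (fun z _ => step z))).
rewrite sumrB rsum subr_le0.
apply: (@le_trans _ _ (\sum_z (Uz z + Vz z) / 2)).
  apply: ler_sum => z _; apply: sqrt_amgm.
    rewrite /Uz; apply: mulr_ge0 => //; apply: prodr_ge0 => i _.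
    by apply: mulr_ge0; [exact: mA_ge0 (qA0 i)|exact: c_ge0 (qB0 i)].
  rewrite /Vz; apply: mulr_ge0 => //; apply: prodr_ge0 => i _.
  by apply: mulr_ge0; [exact: mA_ge0 (qB0 i)|exact: c_ge0 (qA0 i)].
rewrite -mulr_suml big_split /=.
have := sumU; have := sumV; lra.
Qed.

End Key.


Section Main.
Variables (R : realType) (X A : finType) (W : X -> A -> R).
Hypothesis Xpos : (0 < #|X|)%N.
Hypothesis W0 : forall x a, 0 <= W x a.
Hypothesis Wsum : forall x, \sum_a W x a = 1.
Variables (x0 : X) (a0 : A).
Variable s : R.
Hypothesis hobj : forall q : X -> A -> R, is_dist (joint q) ->
  (forall x a, 0 < q x a -> 0 < W x a) -> Fr W q / ln 2 <= s.

Lemma ln2_pos : 0 < ln (2 : R).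
Proof. by apply: ln_gt0; rewrite ltr1n. Qed.

Lemma value_bound n (Q : {ffun 'I_n -> X} -> {ffun 'I_n -> X} -> {ffun 'I_n -> A} -> {ffun 'I_n -> A} -> R) : no_signalling Q ->
  ns_value W Q <= expR (n%:R * (s * ln 2 - ln (#|X|%:R : R))).
Proof.
move=> [Q0 [Qs [QA QB]]].
have [vle|vp] := lerP (ns_value W Q) 0.
  by apply: (le_trans vle); exact: expR_ge0.
pose a0n : {ffun 'I_n -> A} := [ffun _ => a0].
pose Q1 x a := \sum_z Q x z a a0n.
pose Q2 x b := \sum_y Q y x a0n b.
have Q10 x a : 0 <= Q1 x a by apply: sumr_ge0.
have Q20 x a : 0 <= Q2 x a by apply: sumr_ge0.
have Q1s a : \sum_x Q1 x a = 1 by exact: Qs.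
have Q2s b : \sum_x Q2 x b = 1 by rewrite /Q2 exchange_big; exact: Qs.
have vT : ns_value W Q <= Tz W Q1 Q2.
  rewrite /ns_value /Tz sumZ; apply: ler_sum => x _; apply: ler_sum => a _.
  apply: ler_sum => b _; apply: ler_wpM2l; first exact: (pz0 W0 ((x, a), b)).
  apply: le_sqrt_prod => //=.
    rewrite /Q1 (QB x a a0n b).
    by apply: (@term_le_sum _ _ (fun z => Q x z a b)).
  rewrite /Q2 (QA x a0n a b).
  by apply: (@term_le_sum _ _ (fun y => Q y x a b)).
have Tp : 0 < Tz W Q1 Q2 := lt_le_trans vp vT.
have K := key W0 Xpos Q10 Q20 Q1s Q2s Tp.
have Fb (q : X -> A -> R) : is_dist (joint q) ->
    (forall x a, 0 < q x a -> 0 < W x a) -> Fr W q <= s * ln 2.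
  by move=> qd qs; rewrite -ler_pdivrMr ?ln2_pos //; exact: hobj.
have K2 : ln (Tz W Q1 Q2) <= n%:R * (s * ln 2 - ln (#|X|%:R : R)).
  apply: (le_trans K).
  have : \sum_(i < n) (Fr W (qA W Q1 Q2 i) + Fr W (qB W Q1 Q2 i))
      <= \sum_(i < n) (s * ln 2 + s * ln 2).
    apply: ler_sum => i _; apply: lerD; apply: Fb.
    - have H := qA_dist W0 Tp i; exact: H.
    - by move=> x a; apply: (qA_supp W0 Tp).
    - have H := qB_dist W0 Tp i; exact: H.
    - by move=> x a; apply: (qB_supp W0 Tp).
  rewrite sumr_const card_ord => H.
  have e1 (x : R) : x *+ n = n%:R * x by rewrite mulr_natl.
  rewrite (e1 (s * ln 2 + s * ln 2)) in H; rewrite (e1 (ln (#|X|%:R : R))); lra.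
apply: (le_trans vT).
have eP : 0 < expR (n%:R * (s * ln 2 - ln (#|X|%:R : R))) := expR_gt0 _.
by rewrite -ler_ln ?posrE // expRK.
Qed.

Lemma value_witness n : exists Q : {ffun 'I_n -> X} -> {ffun 'I_n -> X} ->
    {ffun 'I_n -> A} -> {ffun 'I_n -> A} -> R,
  no_signalling Q /\ 0 < ns_value W Q.
Proof.
pose x0n : {ffun 'I_n -> X} := [ffun _ => x0].
pose Q0 (y z : {ffun 'I_n -> X}) (a b : {ffun 'I_n -> A}) : R :=
  if (y == x0n) && (z == x0n) then 1 else 0.
exists Q0; split.
  split; first by move=> y z a b; rewrite /Q0; case: ifP => _; rewrite ?ler01 ?lexx.
  split; last by split.
  move=> a b.
  have inner y : \sum_z Q0 y z a b = if y == x0n then 1 else 0.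
    rewrite (bigD1 x0n) //= big1 ?addr0.
      by rewrite /Q0 eqxx andbT.
    by move=> z zn; rewrite /Q0 (negbTE zn) andbF.
  rewrite (eq_bigr _ (fun y _ => inner y)).
  rewrite (bigD1 x0n) //= eqxx big1 ?addr0 // => y yn.
  by rewrite (negbTE yn).
rewrite /ns_value (bigD1 x0n) //= [e in _ + e]big1 ?addr0; last first.
  move=> x xn; apply: big1 => a _; apply: big1 => b _.
  by rewrite /Q0 (negbTE xn) mulr0.
have SP : \sum_(a : {ffun 'I_n -> A}) \prod_i W x0 (a i) = 1.
  transitivity (\prod_(i < n) \sum_j W x0 j).
    by rewrite bigA_distr_bigA.
  by rewrite big1.
have E (a b : {ffun 'I_n -> A}) : Pn W x0n a b * Q0 x0n x0n a b =
    (#|X|%:R ^- n) * ((\prod_i W x0 (a i)) * (\prod_i W x0 (b i))).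
  rewrite /Q0 eqxx mulr1 /Pn; congr (_ * _); rewrite -big_split.
  by apply: eq_bigr => i _; rewrite ffunE.
rewrite (eq_bigr (fun a : {ffun 'I_n -> A} => (#|X|%:R ^- n) * \prod_i W x0 (a i))); last first.
  move=> a _; rewrite (eq_bigr _ (fun b _ => E a b)).
  by rewrite -mulr_sumr -mulr_sumr SP mulr1.
by rewrite -mulr_sumr SP mulr1 invr_gt0 exprn_gt0 // ltr0n.
Qed.

Lemma omega_bound n : (0 < n)%N ->
  log2 (omega_ns W n) / n%:R <= s - log2 (#|X|%:R : R).
Proof.
move=> n0.
set B := expR (n%:R * (s * ln 2 - ln (#|X|%:R : R))).
have [Q [nsQ vp]] := value_witness n.
have ubE : ubound [set v | exists Q, no_signalling Q /\ v = @ns_value R X A W n Q] B.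
  by move=> _ [Q' [nsQ' ->]]; exact: value_bound.
have le1 : omega_ns W n <= B.
  by rewrite /omega_ns; apply: ge_sup => //; exists (ns_value W Q); exists Q.
have ge1 : ns_value W Q <= omega_ns W n.
  by rewrite /omega_ns; apply: ub_le_sup; [exists B|exists Q].
have wp : 0 < omega_ns W n := lt_le_trans vp ge1.
have H : ln (omega_ns W n) <= n%:R * (s * ln 2 - ln (#|X|%:R : R)).
  by rewrite -(expRK (n%:R * (s * ln 2 - ln (#|X|%:R : R)))) ler_ln ?posrE ?expR_gt0.
have l2 := ln2_pos.
rewrite /log2 ler_pdivrMr ?ltr0n // ler_pdivrMr //.
have -> : (s - ln (#|X|%:R : R) / ln 2) * n%:R * ln 2 =
   n%:R * (s * ln 2 - ln (#|X|%:R : R)).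
  by field; rewrite gt_eqF.
exact: H.
Qed.

End Main.

Theorem mainTheorem3 (R : realType) (X A : finType) (W : X -> A -> R) :
  (0 < #|X|)%N ->
  is_channel W ->
  (limn_esup (fun n : nat => (log2 (omega_ns W n) / n%:R)%:E) <=
   ereal_sup [set objective W q | q in [set q : X -> A -> R | is_dist (joint q)]]
     - (log2 #|X|%:R)%:E)%E.
Proof.
move=> Xpos HW.
have W0 x a : 0 <= W x a := (HW x).1 a.
have Wsum x : \sum_a W x a = 1 := (HW x).2.
have [x0 _] : exists x0 : X, x0 \in X by apply/card_gt0P.
have [a0 _] : exists a0 : A, true.
  case: (pickP (fun _ : A => true)) => [a0 _|H]; first by exists a0.
  have := Wsum x0; rewrite big_pred0; last exact: H.
  by move=> /eqP; rewrite eq_sym oner_eq0.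
set S := ereal_sup _.
have ub q : is_dist (joint q) -> (objective W q <= S)%E.
  by move=> qd; apply: ereal_sup_ubound; exists q.
have obj q : is_dist (joint q) -> (forall x a, 0 < q x a -> 0 < W x a) ->
    objective W q = (Fr W q / ln 2)%:E.
  by move=> qd qs; apply: obj_eq => // x a; exact: (qd.1 (x, a)).
case HS : S => [s| |].
- have hobj q : is_dist (joint q) ->
      (forall x a, 0 < q x a -> 0 < W x a) -> Fr W q / ln 2 <= s.
    by move=> qd qs; have := ub q qd; rewrite HS (obj q qd qs) lee_fin.
  rewrite -EFinB limn_esup_lim; apply: lime_le; first exact: is_cvg_esups.
  exists 1%N => // m /= m1; apply: ge_ereal_sup => _ [k /= mk <-].
  rewrite lee_fin; apply: (omega_bound Xpos W0 Wsum x0 a0 hobj).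
  exact: leq_trans m1 mk.
- by rewrite /= leey.
- exfalso.
  pose q x a := W x a / (#|X|%:R : R).
  have Xp : 0 < (#|X|%:R : R) by rewrite ltr0n.
  have qd : is_dist (joint q).
    split; first by move=> t; rewrite /joint /q divr_ge0 // ltW.
    rewrite /joint -(pair_bigA _ (fun x a => q x a)) /q.
    under eq_bigr do rewrite -mulr_suml Wsum.
    rewrite (_ : \sum_(x : X) 1 / (#|X|%:R : R) = #|X|%:R * (1 / #|X|%:R)); last by rewrite sumr_const mulr_natl.
    by rewrite mul1r mulfV // gt_eqF.
  have qs x a : 0 < q x a -> 0 < W x a.
    by rewrite /q pmulr_lgt0 // invr_gt0.
  by have := ub q qd; rewrite HS (obj q qd qs).
Qed.
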